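(* Let $M,N\in\mathbb N$ with $M>N$, let $\mathcal B\subseteq\mathcal D^N$, and let $f\in L_q[0,1]$ with $\int f=0$. On $\{-1,1\}^{\mathcal B}$ with the uniform probability, define $Y(\theta)=\langle f,\sum_{K\in\mathcal B}\theta_Kh^M_K\rangle$. Then $\mathbb E(Y)=0$ and $\mathrm{Var}(Y)\le\|f\|_q^2\,|\bigcup\mathcal B|^{1/p}\,2^{-N/p}$, where $|\bigcup\mathcal B|$ is the Lebesgue measure of the union of the intervals in $\mathcal B$.
   Context: Fix $1<p<\infty$, $q=p/(p-1)$. $\langle g,f\rangle=\int_0^1 gf$. A dyadic interval is $[(i-1)2^{-n},i2^{-n})$ with $n\ge0$, $1\le i\le2^n$; $\mathcal D^n$ denotes those of length $2^{-n}$ and $\mathcal D_n=\bigcup_{k=0}^n\mathcal D^k$. For a dyadic interval $I$, $I^+$, $I^-$ are its left and right halves and $h_I=\chi_{I^+}-\chi_{I^-}$. For each $n\in\mathbb N$ a family $(h^n_I)_{I\in\mathcal D_{n-1}}$ in $L_p[0,1]$ is fixed, having the same joint distribution as $(h_I)_{I\in\mathcal D_{n-1}}$, such that the $\sigma$-algebras $\sigma(h^n_I:I\in\mathcal D_{n-1})$, $n\in\mathbb N$, are independent. *)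

(* Defs.v *)
From HB Require Import structures.
From mathcomp Require Import all_boot all_order all_algebra.
From mathcomp Require Import all_classical all_reals all_analysis.
Set Implicit Arguments. Unset Strict Implicit. Unset Printing Implicit Defensive.
Import Order.TTheory GRing.Theory Num.Theory.
Local Open Scope classical_set_scope.
Local Open Scope ring_scope.

(* Dyadic interval I_{n,i} = [i 2^-n, (i+1) 2^-n), 0-based i (0 <= i < 2^n).
   This is the paper's [(i'-1)2^-n, i'2^-n) with i' = i+1. *)
Definition dyadic {R : realType} (n i : nat) : set R :=
  `[(i%:R / 2 ^+ n), (i.+1%:R / 2 ^+ n)[.

(* Haar function h_I = chi_{I^+} - chi_{I^-} for I = I_{n,i}:
   I^+ = I_{n+1,2i} (left half), I^- = I_{n+1,2i+1} (right half). *)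
Definition haar {R : realType} (n i : nat) (x : R) : R :=
  \1_(dyadic n.+1 i.*2) x - \1_(dyadic n.+1 i.*2.+1) x.

Definition unitI {R : realType} : set R := `[0%R, 1%R].

(* index set D_{n-1} = {(k,i) : k <= n-1, i < 2^k}, for n >= 1 *)
Definition Dupto (n : nat) : set (nat * nat) :=
  [set j | (j.1 < n)%N /\ (j.2 < 2 ^ j.1)%N].

(* Equality of joint distributions of the finite families
   (g_j)_{j in D_{n-1}} and (haar_j)_{j in D_{n-1}} on ([0,1], Lebesgue):
   their joint laws agree on all measurable rectangles (which determine the
   law on the product Borel sigma-algebra). *)
Definition same_joint_law {R : realType} (n : nat) (g : nat -> nat -> R -> R) :=
  forall A : nat -> nat -> set R, (forall k i, measurable (A k i)) ->
    (@lebesgue_measure R) (unitI `&` \bigcap_(j in Dupto n) (g j.1 j.2 @^-1` A j.1 j.2))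
    = (@lebesgue_measure R) (unitI `&` \bigcap_(j in Dupto n) (haar j.1 j.2 @^-1` A j.1 j.2)).

Definition gen_events {R : realType} (h : nat -> nat -> nat -> R -> R) (n : nat)
  : set (set R) :=
  [set E | exists k i (A : set R), [/\ (k < n)%N, (i < 2 ^ k)%N, measurable A &
          E = unitI `&` (h n k i @^-1` A)]].

(* Mutual independence of the sigma-algebras sigma(h^n_I : I in D_{n-1}), n >= 1. *)
Definition indep_levels {R : realType} (h : nat -> nat -> nat -> R -> R) :=
  forall (S : seq nat) (E : nat -> set R), uniq S -> all (fun n => 0 < n)%N S ->
    (forall n, n \in S -> <<s unitI, gen_events h n>> (E n)) ->
    (@lebesgue_measure R) (unitI `&` \bigcap_(n in [set n | n \in S]) E n)
    = (\prod_(n <- S) (@lebesgue_measure R) (E n))%E.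

(* g is in L_r[0,1] (a representative: measurable on [0,1], finite r-th moment) *)
Definition inL {R : realType} (r : R) (g : R -> R) :=
  measurable_fun unitI g /\
  (\int[@lebesgue_measure R]_(x in unitI) ((`|g x| `^ r)%:E) < +oo)%E.

Definition Lnorm01 {R : realType} (r : R) (g : R -> R) : R :=
  (Rintegral (@lebesgue_measure R) unitI (fun x => `|g x| `^ r)) `^ r^-1.

Definition uexp {R : realType} {T : finType} (X : T -> R) : R :=
  (#|T|%:R)^-1 * \sum_(t : T) X t.
Definition uvar {R : realType} {T : finType} (X : T -> R) : R :=
  uexp (fun t => (X t - uexp X) ^+ 2).

Definition sgnb {R : realType} (b : bool) : R := if b then 1 else -1.

(* Main.v *)
Require Import Defs.
From HB Require Import structures.
From mathcomp Require Import all_boot all_order all_algebra.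
From mathcomp Require Import all_classical all_reals all_analysis.
From mathcomp Require Import ring lra measurable_realfun.
Import Order.TTheory GRing.Theory Num.Theory.
Set Implicit Arguments. Unset Strict Implicit.
Local Open Scope classical_set_scope.
Local Open Scope ring_scope.

Lemma dyadicP (R : realType) n i (x : R) :
  dyadic n i x <-> (i%:R <= x * 2 ^+ n /\ x * 2 ^+ n < i.+1%:R).
Proof.
have h2 : (0 : R) < 2 ^+ n by rewrite exprn_gt0.
rewrite /dyadic /= in_itv /= ler_pdivrMr // ltr_pdivlMr //.
by split => [/andP[]|[-> ->]].
Qed.

Lemma dyadic_disj (R : realType) n i j (x : R) :
  dyadic n i x -> dyadic n j x -> i = j.
Proof.
move=> /dyadicP [h1 h2] /dyadicP [h3 h4].
have a : (i%:R : R) < j.+1%:R by apply: le_lt_trans h4.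
have b : (j%:R : R) < i.+1%:R by apply: le_lt_trans h2.
rewrite ltr_nat in a; rewrite ltr_nat in b.
by move: a b; rewrite !ltnS => a b; apply/eqP; rewrite eqn_leq a b.
Qed.

Lemma dyadic_half (R : realType) n i (x : R) :
  dyadic n.+1 i.*2 x \/ dyadic n.+1 i.*2.+1 x -> dyadic n i x.
Proof.
rewrite !dyadicP exprS.
have e1 : (i.*2%:R : R) = 2 * i%:R by rewrite -muln2 natrM mulrC.
have e2 : (i.*2.+1%:R : R) = 2 * i%:R + 1 by rewrite -addn1 natrD e1.
have e3 : (i.*2.+2%:R : R) = 2 * i%:R + 2 by rewrite -addn2 natrD e1.
have e4 : (i.+1%:R : R) = i%:R + 1 by rewrite -addn1 natrD.
rewrite e1 e2 e3 e4 mulrA (mulrC x 2) -mulrA.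
move: (x * 2 ^+ n) => y; move: (i%:R : R) => z.
move=> [[]|[]] ? ?; split; lra.
Qed.
Lemma haar_bound (R : realType) n i (x : R) : `|haar n i x| <= 1.
Proof.
rewrite /haar !indicE.
by case: (x \in _); case: (x \in _); rewrite /= ?subrr ?subr0 ?sub0r ?normrN ?normr0 ?normr1.
Qed.

Lemma haar_supp (R : realType) n i (x : R) : haar n i x != 0 -> dyadic n i x.
Proof.
rewrite /haar !indicE => H; apply: dyadic_half.
move: H; case: (boolP (x \in _)) => [/set_mem ?|_]; first by left.
case: (boolP (x \in _)) => [/set_mem ?|_]; first by right.
by rewrite subrr eqxx.
Qed.

Lemma dyadic_measure (R : realType) n i :
  (@lebesgue_measure R) (dyadic n i) = ((2 ^+ n)^-1)%:E.
Proof.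
rewrite /dyadic lebesgue_measure_itv /=.
have h2 : (0 : R) < 2 ^+ n by rewrite exprn_gt0.
rewrite lte_fin ltr_pM2r ?invr_gt0 // ltr_nat ltnSn.
by rewrite -EFinD -mulrBl -natrB // subSnn mul1r.
Qed.
Lemma bigcap_pick (R : realType) (g : nat -> nat -> R -> R) (M N K L : nat)
  (S1 S2 : set R) : (N < M)%N -> (K < 2 ^ N)%N -> (L < 2 ^ N)%N ->
  \bigcap_(j in Dupto M) (g j.1 j.2 @^-1`
     ((fun k i => (if (k == N) && (i == K) then S1 else setT) `&`
                 (if (k == N) && (i == L) then S2 else setT)) j.1 j.2))
  = g N K @^-1` S1 `&` g N L @^-1` S2.
Proof.
move=> hNM hK hL; apply/seteqP; split => x /=.
  move=> H; have := H (N, K) (conj hNM hK); have := H (N, L) (conj hNM hL).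
  by rewrite /= !eqxx /= => -[_ h2] [h1 _].
move=> [h1 h2] [k i] _ /=; split.
  by case: ifP => [/andP[/eqP -> /eqP ->]|].
by case: ifP => [/andP[/eqP -> /eqP ->]|].
Qed.

Lemma law2 (R : realType) (M N K L : nat) (g : nat -> nat -> R -> R)
  (hl : same_joint_law M g) : (N < M)%N -> (K < 2 ^ N)%N -> (L < 2 ^ N)%N ->
  forall S1 S2 : set R, measurable S1 -> measurable S2 ->
  (@lebesgue_measure R) (unitI `&` (g N K @^-1` S1 `&` g N L @^-1` S2))
  = (@lebesgue_measure R) (unitI `&` (haar N K @^-1` S1 `&` haar N L @^-1` S2)).
Proof.
move=> hNM hK hL S1 S2 m1 m2.
have := hl (fun k i => (if (k == N) && (i == K) then S1 else setT) `&`
                 (if (k == N) && (i == L) then S2 else setT)).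
rewrite !bigcap_pick //; apply => k i.
by apply: measurableI; case: ifP.
Qed.
Definition Bad (R : realType) : set R := ~` `[(-1)%R, 1%R].
Definition NZ (R : realType) : set R := ~` [set 0%R].

Lemma measurable_Bad (R : realType) : measurable (@Bad R).
Proof. exact: measurableC. Qed.
Lemma measurable_NZ (R : realType) : measurable (@NZ R).
Proof. exact: measurableC. Qed.

Lemma BadP (R : realType) (y : R) : @Bad R y <-> 1 < `|y|.
Proof.
rewrite /Bad /= in_itv /= -ler_norml ltNge; split.
  by move=> H; apply/negP => H'; apply: H.
by move=> /negP H H'; apply: H.
Qed.

Lemma measurable_haar (R : realType) n i : measurable_fun setT (@haar R n i).
Proof.
apply: measurable_funB; apply: measurable_indic; exact: measurable_itv.
Qed.

Lemma mU (R : realType) : measurable (@unitI R).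
Proof. exact: measurable_itv. Qed.

Lemma fact1 (R : realType) (M N K : nat) (g : nat -> nat -> R -> R)
  (hl : same_joint_law M g) : (N < M)%N -> (K < 2 ^ N)%N ->
  (@lebesgue_measure R) (unitI `&` g N K @^-1` @Bad R) = 0%E.
Proof.
move=> hNM hK.
have := law2 hl hNM hK hK (@measurable_Bad R) (@measurableT _ R^o).
rewrite !preimage_setT !setIT => ->.
rewrite (_ : _ `&` _ = set0) ?measure0 //.
apply/seteqP; split => x //= [_ /BadP]; by rewrite ltNge haar_bound.
Qed.

Lemma fact2 (R : realType) (M N K L : nat) (g : nat -> nat -> R -> R)
  (hl : same_joint_law M g) : (N < M)%N -> (K < 2 ^ N)%N -> (L < 2 ^ N)%N ->
  K != L ->
  (@lebesgue_measure R) (unitI `&` (g N K @^-1` @NZ R `&` g N L @^-1` @NZ R)) = 0%E.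
Proof.
move=> hNM hK hL hKL.
rewrite (law2 hl hNM hK hL (@measurable_NZ R) (@measurable_NZ R)).
rewrite (_ : _ `&` _ = set0) ?measure0 //.
apply/seteqP; split => x //= [_ [/eqP h1 /eqP h2]].
have := dyadic_disj (haar_supp h1) (haar_supp h2).
by move/eqP; rewrite (negbTE hKL).
Qed.

Lemma fact3 (R : realType) (M N K : nat) (g : nat -> nat -> R -> R)
  (hl : same_joint_law M g) : (N < M)%N -> (K < 2 ^ N)%N ->
  ((@lebesgue_measure R) (unitI `&` g N K @^-1` @NZ R) <= ((2 ^+ N)^-1)%:E)%E.
Proof.
move=> hNM hK.
have := law2 hl hNM hK hK (@measurable_NZ R) (@measurableT _ R^o).
rewrite !preimage_setT !setIT => ->.
rewrite -(@dyadic_measure R N K); apply: le_measure; rewrite ?inE.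
- apply: measurableI; first exact: mU.
  rewrite -[X in measurable X]setTI; exact: measurable_haar measurableT _ (@measurable_NZ R).
- exact: measurable_itv.
- by move=> x [_ /eqP /haar_supp].
Qed.
Lemma Nq (R : realType) (q : R) (q0 : 0 < q) (f : R -> R) (hf : inL q f) :
  Lnorm (@lebesgue_measure R) q%:E (EFin \o (fun x => if x \in (@unitI R) then f x else 0%R)) = (Lnorm01 q f)%:E.
Proof.
rewrite unlock /Lnorm01 /Rintegral.
have e : (\int[@lebesgue_measure R]_x (`|(EFin \o (fun x => if x \in (@unitI R) then f x else 0%R)) x| `^ q)
   = \int[@lebesgue_measure R]_(x in unitI) (`|f x| `^ q)%:E)%E.
  rewrite [RHS]integral_mkcond; apply: eq_integral => x _.
  rewrite /patch /=; case: ifP => _ //=.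
  by rewrite normr0 powR0 // gt_eqF.
rewrite e; have [_ hf2] := hf.
have hfin : (\int[@lebesgue_measure R]_(x in unitI) (`|f x| `^ q)%:E)%E \is a fin_num.
  rewrite ge0_fin_numE //; apply: integral_ge0 => x _; rewrite lee_fin powR_ge0 //.
by rewrite -[in LHS](fineK hfin) poweR_EFin.
Qed.

Lemma Np (R : realType) (p : R) (p0 : 0 < p) (E : set R) (mE : measurable E) :
  Lnorm (@lebesgue_measure R) p%:E (EFin \o \1_E) = ((@lebesgue_measure R) E `^ p^-1)%E.
Proof.
rewrite unlock; congr (_ `^ _)%E.
have := integral_indic (@lebesgue_measure R) measurableT mE.
rewrite setIT => <-.
apply: eq_integral => x _ /=; rewrite indicE.
case: (x \in E) => /=; first by rewrite normr1 powR1.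
by rewrite normr0 powR0 // gt_eqF.
Qed.

Lemma measure_unitI (R : realType) : (@lebesgue_measure R) unitI = 1%E.
Proof. by rewrite /unitI lebesgue_measure_itv /= lte01 /= oppr0 adde0. Qed.

Lemma key (R : realType) (p q : R) (hp : 1 < p) (hq : q = p / (p - 1))
  (f : R -> R) (hf : inL q f) (g : R -> R) (mg : measurable_fun unitI g)
  (E : set R) (mE : measurable E) (EU : E `<=` unitI)
  (hae : {ae (@lebesgue_measure R), forall x, unitI x -> `|g x| <= \1_E x}) :
  (\int[@lebesgue_measure R]_(x in unitI) (`|f x * g x|)%:E
     <= (Lnorm01 q f * fine ((@lebesgue_measure R) E) `^ p^-1)%:E)%E.
Proof.
have p0 : 0 < p by lra.
have q0 : 0 < q by rewrite hq divr_gt0 //; lra.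
have pq : q^-1 + p^-1 = 1.
  by rewrite hq invf_div; field; rewrite gt_eqF.
have [mf _] := hf.
have mU' := @mU R.
have H1 : (\int[@lebesgue_measure R]_(x in unitI) (`|f x * g x|)%:E <= \int[@lebesgue_measure R]_(x in unitI) (`|f x| * \1_E x)%:E)%E.
  apply: ae_ge0_le_integral => //.
  - apply/measurable_EFinP; apply: measurableT_comp => //.
    exact: measurable_funM.
  - apply/measurable_EFinP; apply: measurable_funM.
      exact: measurableT_comp.
    exact: measurable_indic.
  - case: hae => A [mA A0 sub]; exists A; split => // x /= nx.
    apply: sub => /= gx; apply: nx => Ux.
    by rewrite lee_fin normrM ler_wpM2l //; apply: gx.
apply: le_trans H1 _.
set F := (fun x => if x \in (@unitI R) then f x else 0%R).
have mF : measurable_fun setT F.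
  have := (measurable_restrictT f mU').1 mf.
  congr measurable_fun; apply/funext => x; rewrite /patch /F; case: ifP.
have H2 : (\int[@lebesgue_measure R]_(x in unitI) (`|f x| * \1_E x)%:E = Lnorm (@lebesgue_measure R) 1%E (EFin \o (F \* \1_E)%R))%E.
  rewrite Lnorm1 [LHS]integral_mkcond.
  apply: eq_integral => x _; rewrite /patch /F /=; case: ifP => _ /=.
    by rewrite normrM [`|\1_E x|]ger0_norm // indicE.
  by rewrite mul0r normr0.
rewrite H2.
have mI : measurable_fun setT (\1_E : R -> R) by apply: measurable_indic.
have H3 := hoelder (@lebesgue_measure R) mF mI q0 p0 pq.
apply: le_trans H3 _.
rewrite Nq // Np //.
have hfin : (@lebesgue_measure R) E \is a fin_num.
  rewrite ge0_fin_numE //; apply: (@le_lt_trans _ _ ((@lebesgue_measure R) unitI)).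
    by apply: le_measure; rewrite ?inE.
  by rewrite measure_unitI ltry.
by rewrite -[in X in (_ * X <= _)%E](fineK hfin) poweR_EFin -EFinM.
Qed.
Lemma measure_bigsetU_le (R : realType) (I : Type) (s : seq I) (P : pred I)
  (F : I -> set R) : (forall i, measurable (F i)) ->
  ((@lebesgue_measure R) (\big[setU/set0]_(i <- s | P i) F i)
     <= \sum_(i <- s | P i) (@lebesgue_measure R) (F i))%E.
Proof.
move=> mF; elim: s => [|i s IH]; first by rewrite !big_nil measure0.
rewrite !big_cons; case: ifP => _ //.
have mB : measurable (\big[setU/set0]_(j <- s | P j) F j).
  by apply: bigsetU_measurable.
apply: le_trans (measureU2 (@lebesgue_measure R) (mF i) mB) _.
exact: leeD2l.
Qed.

Lemma bigsetU_in (T : Type) (I : eqType) (s : seq I) (P : pred I)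
  (F : I -> set T) i x : i \in s -> P i -> F i x ->
  (\big[setU/set0]_(j <- s | P j) F j) x.
Proof.
elim: s => // j s IH; rewrite inE big_cons => /orP[/eqP <-|/IH H] Pi Fx.
  by rewrite Pi; left.
by case: ifP => _; [right|]; exact: H.
Qed.

Lemma famM (R : realType) (p q : R) (hp : 1 < p) (hq : q = p / (p - 1))
  (f : R -> R) (hf : inL q f) (I : finType) (G : I -> R -> R)
  (mG : forall K, measurable_fun unitI (G K))
  (h1 : forall K, (@lebesgue_measure R) (unitI `&` G K @^-1` @Bad R) = 0%E)
  (h2 : forall K L, K != L ->
     (@lebesgue_measure R) (unitI `&` (G K @^-1` @NZ R `&` G L @^-1` @NZ R)) = 0%E)
  (c : R) (c0 : 0 <= c)
  (h3 : forall K, ((@lebesgue_measure R) (unitI `&` G K @^-1` @NZ R) <= c%:E)%E)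
  (a : I -> R) (ha : forall K, `|a K| <= 1) (S : {set I})
  (hS : forall K, a K != 0 -> K \in S) :
  (@lebesgue_measure R).-integrable unitI
     (EFin \o (fun x => f x * \sum_K a K * G K x)) /\
  `|Rintegral (@lebesgue_measure R) unitI (fun x => f x * \sum_K a K * G K x)|
     <= Lnorm01 q f * (#|S|%:R * c) `^ p^-1.
Proof.
set g := fun x => \sum_K a K * G K x.
have mU' := @mU R.
have [mf _] := hf.
have mg : measurable_fun unitI g.
  by apply: measurable_sum => K; apply: measurable_funM => //; exact: measurable_cst.
have mNZ K : measurable (unitI `&` G K @^-1` @NZ R) by exact: mG mU' _ (@measurable_NZ R).
have mBad K : measurable (unitI `&` G K @^-1` @Bad R) by exact: mG mU' _ (@measurable_Bad R).
have mNZ2 K L : measurable (unitI `&` (G K @^-1` @NZ R `&` G L @^-1` @NZ R)).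
  by rewrite -[X in X `&` _]setIid setIACA; apply: measurableI.
set E := \big[setU/set0]_(K in S) (unitI `&` G K @^-1` @NZ R).
have mE : measurable E by apply: bigsetU_measurable.
have EU : E `<=` unitI.
  apply: (big_ind (fun A : set R => A `<=` unitI)) => //.
  all: try (by move=> A B HA HB x [/HA|/HB]); try (by move=> K _ x []).
have hEle : ((@lebesgue_measure R) E <= (#|S|%:R * c)%:E)%E.
  have H := @measure_bigsetU_le R I (index_enum I) (fun K => K \in S) _ mNZ.
  apply: le_trans H _.
  have H' : (\sum_(i in S) (@lebesgue_measure R) (unitI `&` G i @^-1` @NZ R)
     <= \sum_(i in S) c%:E)%E by apply: lee_sum => K _; exact: h3.
  apply: le_trans H' _.
  by rewrite sumEFin sumr_const mulr_natl.
set Z := (\big[setU/set0]_K (unitI `&` G K @^-1` @Bad R)) `|`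
  \big[setU/set0]_K \big[setU/set0]_(L | L != K)
     (unitI `&` (G K @^-1` @NZ R `&` G L @^-1` @NZ R)).
have mIn K : measurable (\big[setU/set0]_(L | L != K)
     (unitI `&` (G K @^-1` @NZ R `&` G L @^-1` @NZ R))).
  by apply: bigsetU_measurable.
have mZ1 : measurable (\big[setU/set0]_K (unitI `&` G K @^-1` @Bad R)).
  by apply: bigsetU_measurable.
have mZ2 : measurable (\big[setU/set0]_K \big[setU/set0]_(L | L != K)
     (unitI `&` (G K @^-1` @NZ R `&` G L @^-1` @NZ R))).
  by apply: bigsetU_measurable.
have mZ : measurable Z by apply: measurableU.
have inner0 K : (@lebesgue_measure R) (\big[setU/set0]_(L | L != K)
     (unitI `&` (G K @^-1` @NZ R `&` G L @^-1` @NZ R))) = 0%E.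
  apply/eqP; rewrite -measure_le0.
  have H := @measure_bigsetU_le R I (index_enum I) (fun L => L != K) _ (mNZ2 K).
  apply: le_trans H _.
  by rewrite big1 // => L hL; apply: h2; rewrite eq_sym.
have Z0 : (@lebesgue_measure R) Z = 0%E.
  apply/eqP; rewrite -measure_le0.
  apply: le_trans (measureU2 (@lebesgue_measure R) mZ1 mZ2) _.
  rewrite -[leRHS](adde0 0%E); apply: leeD.
    have H := @measure_bigsetU_le R I (index_enum I) xpredT _ mBad.
    apply: le_trans H _.
    by rewrite big1.
  have H := @measure_bigsetU_le R I (index_enum I) xpredT _ mIn.
  apply: le_trans H _.
  by rewrite big1.
have hae : {ae (@lebesgue_measure R), forall x, unitI x -> `|g x| <= \1_E x}.
  exists Z; split => // x /= nx; apply: contrapT => nZ; apply: nx => Ux.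
  have hb K : `|G K x| <= 1.
    rewrite leNgt; apply/negP => /BadP bad; apply: nZ; left.
    by apply: bigsetU_in (mem_index_enum K) isT _.
  have hd K L : K != L -> G K x = 0 \/ G L x = 0.
    move=> KL; apply: contrapT => /not_orP [k l]; apply: nZ; right.
    apply: bigsetU_in (mem_index_enum K) isT _.
    apply: bigsetU_in (mem_index_enum L) _ _; first by rewrite eq_sym.
    by split.
  case: (pselect (exists K0, K0 \in S /\ G K0 x != 0)) => [[K0 [K0S nz]]|nex].
    have xE : E x.
      by apply: bigsetU_in (mem_index_enum K0) K0S _; split => //; exact/eqP.
    rewrite indicE mem_set //= /g (bigD1 K0) //= big1 ?addr0 => [|K KK0].
      rewrite normrM; apply: (le_trans (ler_wpM2l (normr_ge0 _) (hb K0))).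
      by rewrite mulr1 ha.
    have [->|e] := hd K K0 KK0; first by rewrite mulr0.
    by move/eqP: nz; rewrite e.
  rewrite /g big1 ?normr0 ?indicE ?ler0n // => K _.
  case: (boolP (a K == 0)) => [/eqP ->|aK]; first by rewrite mul0r.
  have KS := hS K aK.
  have -> : G K x = 0; last by rewrite mulr0.
  apply: contrapT => ng; apply: nex; exists K; split => //; exact/eqP.
have HK := key hp hq hf mg mE EU hae.
have int : (@lebesgue_measure R).-integrable unitI (EFin \o (fun x => f x * g x)).
  apply/integrableP; split.
    by apply/measurable_EFinP; exact: measurable_funM.
  by apply: le_lt_trans HK _; exact: ltry.
split => //.
have Hn := @le_normr_Rintegral _ _ R (@lebesgue_measure R) unitI (fun x => f x * g x) mU' int.
apply: le_trans Hn _.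
rewrite /Rintegral.
have fin1 : (\int[@lebesgue_measure R]_(x in unitI) (`|f x * g x|)%:E)%E \is a fin_num.
  rewrite ge0_fin_numE; last by apply: integral_ge0 => x _; rewrite lee_fin.
  by apply: le_lt_trans HK _; exact: ltry.
have Hf := fine_le fin1 _ HK.
apply: le_trans (Hf _) _ => //=.
apply: ler_wpM2l; first exact: powR_ge0.
apply: ge0_ler_powR; first by rewrite invr_ge0; lra.
- by rewrite nnegrE fine_ge0.
- by rewrite nnegrE mulr_ge0.
have finE : (@lebesgue_measure R) E \is a fin_num.
  by rewrite ge0_fin_numE //; apply: le_lt_trans hEle _; exact: ltry.
by rewrite -lee_fin fineK.
Qed.
Lemma Rint_lin (R : realType) (I : Type) (s : seq I) (a : I -> R)
  (phi : I -> R -> R) (D : set R) (mD : measurable D)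
  (hi : forall i, (@lebesgue_measure R).-integrable D (EFin \o phi i)) :
  (@lebesgue_measure R).-integrable D (EFin \o (fun x => \sum_(i <- s) a i * phi i x)) /\
  Rintegral (@lebesgue_measure R) D (fun x => \sum_(i <- s) a i * phi i x)
   = \sum_(i <- s) a i * Rintegral (@lebesgue_measure R) D (phi i).
Proof.
elim: s => [|i s [IH1 IH2]].
  rewrite big_nil (_ : (fun x => \sum_(i <- [::]) a i * phi i x) = fun=> 0%R); last first.
    by apply/funext => x; rewrite big_nil.
  split; last by rewrite /Rintegral integral0.
  exact: integrable0.
rewrite (_ : (fun x => \sum_(j <- i :: s) a j * phi j x) =
  (fun x => a i * phi i x) \+ (fun x => \sum_(j <- s) a j * phi j x)); last first.
  by apply/funext => x; rewrite big_cons.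
have hZ : (@lebesgue_measure R).-integrable D (EFin \o (fun x => a i * phi i x)).
  have := @integrableZl _ _ R (@lebesgue_measure R) D mD (a i) _ (hi i).
  by apply: eq_integrable => // x _ /=.
split.
  have := @integrableD _ _ R (@lebesgue_measure R) D mD _ _ hZ IH1.
  by apply: eq_integrable => // x _ /=.
rewrite RintegralD // RintegralZl // IH2 big_cons //.
Qed.
Definition flip (I : finType) (K : I) (th : {ffun I -> bool}) : {ffun I -> bool} :=
  [ffun L => if L == K then ~~ th L else th L].

Lemma flipK (I : finType) (K : I) : involutive (flip K).
Proof.
by move=> th; apply/ffunP => L; rewrite !ffunE; case: eqP => _ //; rewrite negbK.
Qed.

Lemma sgn_sum1 (R : realType) (I : finType) (K : I) :
  \sum_(th : {ffun I -> bool}) (sgnb (th K) : R) = 0.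
Proof.
have e : \sum_(th : {ffun I -> bool}) (sgnb (th K) : R) =
   \sum_(th : {ffun I -> bool}) (sgnb (flip K th K) : R).
  exact: (reindex_inj (inv_inj (flipK K))).
have e2 : \sum_(th : {ffun I -> bool}) (sgnb (flip K th K) : R) =
   - \sum_(th : {ffun I -> bool}) (sgnb (th K) : R).
  rewrite -sumrN; apply: eq_bigr => th _; rewrite ffunE eqxx.
  by case: (th K); rewrite /sgnb ?opprK.
lra.
Qed.

Lemma sgn_sum2 (R : realType) (I : finType) (K L : I) : K != L ->
  \sum_(th : {ffun I -> bool}) (sgnb (th K) * sgnb (th L) : R) = 0.
Proof.
move=> KL.
have e : \sum_(th : {ffun I -> bool}) (sgnb (th K) * sgnb (th L) : R) =
   \sum_(th : {ffun I -> bool}) (sgnb (flip K th K) * sgnb (flip K th L) : R).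
  exact: (reindex_inj (inv_inj (flipK K))).
have e2 : \sum_(th : {ffun I -> bool}) (sgnb (flip K th K) * sgnb (flip K th L) : R) =
   - \sum_(th : {ffun I -> bool}) (sgnb (th K) * sgnb (th L) : R).
  rewrite -sumrN; apply: eq_bigr => th _; rewrite !ffunE eqxx eq_sym (negbTE KL).
  by case: (th K); rewrite /sgnb ?mulNr ?opprK.
lra.
Qed.

Lemma sgn_sq (R : realType) b : (sgnb b : R) * sgnb b = 1.
Proof. by case: b; rewrite /sgnb ?mulr1 ?mulrNN ?mulr1. Qed.

Lemma sum_const_T (R : realType) (T : finType) (x : R) :
  \sum_(t : T) x = #|T|%:R * x.
Proof. by rewrite sumr_const mulr_natl. Qed.

Lemma uvar_lin (R : realType) (I : finType) (c : I -> R)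
  (Y : {ffun I -> bool} -> R)
  (hY : forall th, Y th = \sum_K sgnb (th K) * c K) :
  uexp Y = 0 /\ uvar Y = \sum_K c K ^+ 2.
Proof.
have e0 : \sum_th Y th = 0.
  under eq_bigr do rewrite hY.
  rewrite exchange_big big1 // => K _.
  by rewrite -mulr_suml sgn_sum1 mul0r.
have e0' : uexp Y = 0 by rewrite /uexp e0 mulr0.
split => //.
rewrite /uvar e0' /uexp.
have cT : (#|{ffun I -> bool}|%:R : R) != 0.
  by rewrite pnatr_eq0 card_ffun card_bool -lt0n expn_gt0.
suff -> : \sum_(t : {ffun I -> bool}) (Y t - 0) ^+ 2
   = #|{ffun I -> bool}|%:R * \sum_K c K ^+ 2 by rewrite mulKf.
under eq_bigr do rewrite subr0 hY expr2 mulr_suml.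
under eq_bigr do under eq_bigr do rewrite mulr_sumr.
rewrite exchange_big mulr_sumr; apply: eq_bigr => K _.
rewrite exchange_big (bigD1 K) //= [X in _ + X]big1 ?addr0.
  under eq_bigr do rewrite mulrACA sgn_sq mul1r.
  by rewrite sum_const_T expr2.
move=> L LK.
under eq_bigr do rewrite mulrACA.
by rewrite -mulr_suml sgn_sum2 ?mul0r // eq_sym.
Qed.
Lemma bigsetU_ex (T : Type) (I : Type) (s : seq I) (P : pred I)
  (F : I -> set T) x : (\big[setU/set0]_(j <- s | P j) F j) x ->
  exists2 i, P i & F i x.
Proof.
elim: s => [|j s IH]; first by rewrite big_nil.
rewrite big_cons; case: ifP => Pj; last exact: IH.
by move=> [Fx|/IH //]; exists j.
Qed.

Lemma measure_unionB (R : realType) N (B : {set 'I_(2 ^ N)}) :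
  (@lebesgue_measure R) (\bigcup_(K in [set K | K \in B]) dyadic N K)
  = (#|B|%:R * (2 ^+ N)^-1)%:E.
Proof.
have e : \bigcup_(K in [set K | K \in B]) (dyadic N K : set R) =
   \big[setU/set0]_(K < 2 ^ N | K \in B) dyadic N K.
  apply/seteqP; split => x.
    by move=> [K KB dx]; apply: bigsetU_in (mem_index_enum K) KB dx.
  by move=> H; have [K KB dx] := bigsetU_ex H; exists K.
rewrite e measure_bigsetU_ord_cond.
- rewrite (eq_bigr (fun=> ((2 ^+ N)^-1 : R)%:E)); last by move=> K _; exact: dyadic_measure.
  by rewrite sumEFin sumr_const mulr_natl.
- by move=> K _; exact: measurable_itv.
- move=> i j _ _ [x [di dj]]; apply: val_inj; exact: dyadic_disj di dj.
Qed.

Unset Implicit Arguments. Set Strict Implicit.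

Theorem mainTheorem5 (R : realType) (p q : R) (hp : 1 < p) (hq : q = p / (p - 1))
  (h : nat -> nat -> nat -> R -> R)
  (hL : forall n k i, (0 < n)%N -> (k < n)%N -> (i < 2 ^ k)%N -> inL p (h n k i))
  (hlaw : forall n, (0 < n)%N -> same_joint_law n (h n))
  (hind : indep_levels h)
  (M N : nat) (hMN : (N < M)%N)
  (B : {set 'I_(2 ^ N)})
  (f : R -> R) (hf : inL q f)
  (hf0 : Rintegral (@lebesgue_measure R) unitI f = 0) :
  let Y := fun theta : {ffun {K : 'I_(2 ^ N) | K \in B} -> bool} =>
    Rintegral (@lebesgue_measure R) unitI
      (fun x => f x * \sum_(K : {K : 'I_(2 ^ N) | K \in B})
                         sgnb (theta K) * h M N (val K) x) in
  uexp Y = 0 /\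
  uvar Y <= Lnorm01 q f ^+ 2
            * fine ((@lebesgue_measure R) (\bigcup_(K in [set K | K \in B]) dyadic N K))
                `^ p^-1
            * 2 `^ (- (N%:R / p)).
Proof.
move=> Y.
pose I := {K : 'I_(2 ^ N) | K \in B}.
pose G := fun K : I => h M N (val K).
have M0 : (0 < M)%N by apply: leq_ltn_trans hMN.
have hl := hlaw M M0.
have mG K : measurable_fun unitI (G K) := (hL M N (val K) M0 hMN (ltn_ord _)).1.
have h1 (K : I) : (@lebesgue_measure R) (unitI `&` G K @^-1` @Bad R) = 0%E := fact1 hl hMN (ltn_ord (val K)).
have h2 (K L : I) : K != L -> (@lebesgue_measure R)
    (unitI `&` (G K @^-1` @NZ R `&` G L @^-1` @NZ R)) = 0%E.
  move=> KL; apply: (fact2 hl hMN (ltn_ord _) (ltn_ord _)).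
  by apply: contra KL => /eqP e; apply/eqP; do 2 apply: val_inj.
have h3 (K : I) : ((@lebesgue_measure R) (unitI `&` G K @^-1` @NZ R) <= ((2 ^+ N)^-1 : R)%:E)%E := fact3 hl hMN (ltn_ord (val K)).
pose c : R := (2 ^+ N)^-1.
have c0 : 0 <= c by rewrite /c invr_ge0 exprn_ge0.
pose cK := fun K : I => Rintegral (@lebesgue_measure R) unitI (fun x => f x * G K x).
have intK (K : I) : (@lebesgue_measure R).-integrable unitI (EFin \o (fun x => f x * G K x))
    /\ `|cK K| <= Lnorm01 q f * (1 * c) `^ p^-1.
  have := @famM R p q hp hq f hf I G mG h1 h2 c c0 h3 (fun L => (L == K)%:R) _ [set K] _.
  have e : (fun x => f x * \sum_L (L == K)%:R * G L x) = (fun x => f x * G K x).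
    apply/funext => x; rewrite (bigD1 K) //= eqxx mul1r big1 ?addr0 //.
    by move=> L /negbTE ->; rewrite mul0r.
  rewrite e cards1; apply.
  - by move=> L; case: eqP; rewrite ?normr1 ?normr0 ?ler01.
  - by move=> L; rewrite !inE; case: (L == K) => //=; rewrite ?mulr0n eqxx.
have hY th : Y th = \sum_K sgnb (th K) * cK K.
  rewrite /Y.
  have -> : (fun x => f x * \sum_(K : I) sgnb (th K) * h M N (val K) x)
    = (fun x => \sum_(K : I) sgnb (th K) * (f x * G K x)).
    apply/funext => x; rewrite mulr_sumr; apply: eq_bigr => J _; exact: mulrCA.
  exact: (Rint_lin _ _ (@mU R) (fun K => (intK K).1)).2.
have [e1 e2] := uvar_lin hY.
split => //; rewrite e2.
set L0 := Lnorm01 q f.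
have L0ge : 0 <= L0 by exact: powR_ge0.
set A := L0 * (1 * c) `^ p^-1.
have Age : 0 <= A by rewrite /A mulr_ge0 // powR_ge0.
have hsum : \sum_K `|cK K| <= L0 * (#|[set: I]%SET|%:R * c) `^ p^-1.
  have := @famM R p q hp hq f hf I G mG h1 h2 c c0 h3 (fun L => Num.sg (cK L)) _ [set: I] _.
  have -> : Rintegral (@lebesgue_measure R) unitI
      (fun x => f x * \sum_L Num.sg (cK L) * G L x) = \sum_K `|cK K|.
    have -> : (fun x => f x * \sum_L Num.sg (cK L) * G L x)
      = (fun x => \sum_(L : I) Num.sg (cK L) * (f x * G L x)).
      apply/funext => x; rewrite mulr_sumr; apply: eq_bigr => J _; exact: mulrCA.
    rewrite (Rint_lin _ _ (@mU R) (fun K => (intK K).1)).2.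
    by apply: eq_bigr => J _; rewrite normrEsg.
  move=> H.
  have ha' : forall L : I, `|Num.sg (cK L)| <= 1.
    by move=> L; rewrite normr_sg; case: (_ != 0); rewrite ?ler01.
  have hS' : forall L : I, Num.sg (cK L) != 0 -> L \in [set: I]%SET.
    by move=> L _; rewrite !inE.
  have H2 := (H ha' hS').2.
  have H3 : \sum_K `|cK K| <= `|\sum_K `|cK K| | by exact: ler_norm.
  exact: le_trans H3 H2.
have s1 : \sum_K cK K ^+ 2 <= \sum_K A * `|cK K|.
  apply: ler_sum => K _.
  have -> : cK K ^+ 2 = `|cK K| * `|cK K| by rewrite -normrM -expr2 ger0_norm ?sqr_ge0.
  by apply: ler_wpM2r; [exact: normr_ge0 | exact: (intK K).2].
apply: le_trans s1 _.
rewrite -mulr_sumr.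
apply: le_trans (ler_wpM2l Age hsum) _.
have cI : #|[set: I]%SET| = #|B| by rewrite cardsT card_sig; apply: eq_card => x; rewrite !inE.
have e2' : 2 `^ (- (N%:R / p)) = c `^ p^-1.
  by rewrite /c -powR_mulrn ?ler0n // -powRN -powRrM mulNr.
rewrite measure_unionB /= cI e2' /A mul1r.
rewrite le_eqVlt; apply/orP; left; apply/eqP; ring.
Qed.
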